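(* Let $S$ be a solid and let $x,y,z\in S$. If $y$ and $z$ are of the same sign (both positive or both negative), then $x(y+z)=xy+xz$.
   Context: A solid is a set $S$ with two binary operations $+$ and $\cdot$ (written $xy$) and a binary relation $\le$ satisfying the following axioms (all variables range over $S$). (A1) $+$ is associative and commutative. (A2) For each $x$ there is $e$ with $x+e=x$ such that $e+f=e$ for every $f$ with $x+f=x$; this $e$ is unique and is denoted $e(x)$ (the magnitude of $x$). An element $x$ with $x=e(x)$ is called a magnitude. (A3) For each $x$ there is $s$ with $x+s=e(x)$ and $e(s)=e(x)$; it is unique and denoted $-x$; write $x-y$ for $x+(-y)$. (A4) $e(x+y)=e(x)$ or $e(x+y)=e(y)$. (M1) $\cdot$ is associative and commutative. (M2) For each $x\neq e(x)$ there is $u$ with $xu=x$ such that $uv=u$ for every $v$ with $xv=x$; it is unique and denoted $u(x)$. (M3) For each $x\ne e(x)$ there is $d$ with $xd=u(x)$ and $u(d)=u(x)$; it is unique and denoted $x^{-1}$; write $y/x$ for $yx^{-1}$. (M4) If $x\neq e(x)$ and $y\ne e(y)$ then $u(xy)=u(x)$ or $u(xy)=u(y)$. (O1) $\le$ is a total order (reflexive, antisymmetric, transitive, total); $x<y$ means $x\le y$ and $x\ne y$. (O2) $x\le y\Rightarrow x+z\le y+z$. (O3) $y+e(x)=e(x)\Rightarrow (y\le e(x)$ and $-y\le e(x))$. (O4) $(e(x)<x$ and $y\le z)\Rightarrow xy\le xz$. (O5) $e(y)\le y\le z\Rightarrow e(x)y\le e(x)z$. (AM1) For all $x,y$ there is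 $z$ with $e(x)y=e(z)$. (AM2) $e(xy)=e(x)y+e(y)x$. (AM3) If $x\ne e(x)$ then $e(u(x))=e(x)/x$. (AM4) (distributivity axiom) $xy+xz=x(y+z)+e(x)y+e(x)z$. (AM5) $-(xy)=(-x)y$. (E1) There is $m$ with $m+x=x$ for all $x$; it is unique, called zero and denoted $0$. (E2) There is $u$ with $ux=x$ for all $x$; it is unique, called one and denoted $1$. (E3) There is $M$ with $e(x)+M=M$ for all $x$. (E4) There is $x$ with $e(x)\ne 0$ and $e(x)\ne M$. (E5) For every $x$ there is $a$ with $x=a+e(x)$ and $e(a)=0$. (E6) If $x,y$ are magnitudes with $x<y$, there is $z$ with $z\ne e(z)$ and $x<z<y$. Further notation: $S^*=\{x\in S: x\ne e(x)\}$ (zeroless elements). $x$ is positive if $e(x)\le x$ and negative if $x<e(x)$; $|x|=x$ if $x$ is positive and $|x|=-x$ if $x$ is negative. $x$ is precise if $e(x)=0$. The relative uncertainty $R(x)$ is $e(u(x))$ if $x\ne e(x)$, and $M$ (from (E3)) if $x=e(x)$. *)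

(* Defs.v *)
Set Implicit Arguments.

(* The derived operations e(x), -x, u(x), x^{-1} (which the paper obtains from
   the existence parts of (A2),(A3),(M2),(M3)) are carried as fields together
   with their characterizing properties; u and inv are only constrained on
   zeroless elements x <> e x. *)
Record solid := Solid {
  S :> Type;
  add : S -> S -> S;
  mul : S -> S -> S;
  le : S -> S -> Prop;
  e : S -> S;
  opp : S -> S;
  u : S -> S;
  inv : S -> S;
  zero : S;
  bigM : S;
  addA : forall x y z, add x (add y z) = add (add x y) z;
  addC : forall x y, add x y = add y x;
  A2_e : forall x, add x (e x) = x;
  A2_min : forall x f, add x f = x -> add (e x) f = e x;
  A2_uniq : forall x e', add x e' = x -> (forall f, add x f = x -> add e' f = e') -> e' = e x;
  A3_opp : forall x, add x (opp x) = e x /\ e (opp x) = e x;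
  A3_uniq : forall x s, add x s = e x -> e s = e x -> s = opp x;
  A4 : forall x y, e (add x y) = e x \/ e (add x y) = e y;
  mulA : forall x y z, mul x (mul y z) = mul (mul x y) z;
  mulC : forall x y, mul x y = mul y x;
  M2_u : forall x, x <> e x -> mul x (u x) = x;
  M2_min : forall x v, x <> e x -> mul x v = x -> mul (u x) v = u x;
  M2_uniq : forall x u', x <> e x -> mul x u' = x ->
             (forall v, mul x v = x -> mul u' v = u') -> u' = u x;
  M3_inv : forall x, x <> e x -> mul x (inv x) = u x /\ u (inv x) = u x;
  M3_uniq : forall x d, x <> e x -> mul x d = u x -> u d = u x -> d = inv x;
  M4 : forall x y, x <> e x -> y <> e y -> u (mul x y) = u x \/ u (mul x y) = u y;
  le_refl : forall x, le x x;
  le_antisym : forall x y, le x y -> le y x -> x = y;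
  le_trans : forall x y z, le x y -> le y z -> le x z;
  le_total : forall x y, le x y \/ le y x;
  O2 : forall x y z, le x y -> le (add x z) (add y z);
  O3 : forall x y, add y (e x) = e x -> le y (e x) /\ le (opp y) (e x);
  O4 : forall x y z, (le (e x) x /\ e x <> x) -> le y z -> le (mul x y) (mul x z);
  O5 : forall x y z, le (e y) y -> le y z -> le (mul (e x) y) (mul (e x) z);
  AM1 : forall x y, exists z, mul (e x) y = e z;
  AM2 : forall x y, e (mul x y) = add (mul (e x) y) (mul (e y) x);
  AM3 : forall x, x <> e x -> e (u x) = mul (e x) (inv x);
  AM4 : forall x y z, add (mul x y) (mul x z) =
        add (add (mul x (add y z)) (mul (e x) y)) (mul (e x) z);
  AM5 : forall x y, opp (mul x y) = mul (opp x) y;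
  E1 : forall x, add zero x = x;
  E2 : exists one, forall x, mul one x = x;
  E3 : forall x, add (e x) bigM = bigM;
  E4 : exists x, e x <> zero /\ e x <> bigM;
  E5 : forall x, exists a, x = add a (e x) /\ e a = zero;
  E6 : forall x y, x = e x -> y = e y -> (le x y /\ x <> y) ->
       exists z, z <> e z /\ (le x z /\ x <> z) /\ (le z y /\ z <> y)
}.

Arguments add {s0}.
Arguments mul {s0}.
Arguments le {s0}.
Arguments e {s0}.
Arguments opp {s0}.
Arguments u {s0}.
Arguments inv {s0}.
Arguments zero {s0}.
Arguments bigM {s0}.

Definition lt {T : solid} (x y : T) : Prop := le x y /\ x <> y.
Definition positive {T : solid} (x : T) : Prop := le (e x) x.
Definition negative {T : solid} (x : T) : Prop := lt x (e x).

(* Main.v *)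
Require Import Defs.
From Stdlib Require Import Setoid.
Arguments addA {s0}. Arguments addC {s0}. Arguments A2_e {s0}. Arguments A2_min {s0}. Arguments A2_uniq {s0}. Arguments A3_opp {s0}. Arguments A3_uniq {s0}. Arguments A4 {s0}. Arguments mulC {s0}. Arguments le_refl {s0}. Arguments le_antisym {s0}. Arguments le_trans {s0}. Arguments le_total {s0}. Arguments O2 {s0}. Arguments O3 {s0}. Arguments O5 {s0}. Arguments AM1 {s0}. Arguments AM2 {s0}. Arguments AM4 {s0}. Arguments AM5 {s0}. Arguments E5 {s0}.

Section L.
Variable T : solid.
Implicit Types x y z p q : T.

Lemma ee x : e (e x) = e x.
Proof.
  symmetry. apply (A2_uniq (e x) (e x)).
  - apply A2_min. apply A2_e.
  - intros f Hf; exact Hf.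
Qed.

Lemma idem_mag p : add p p = p -> e p = p.
Proof. intro H. symmetry. apply (A2_uniq p p H). intros f Hf; exact Hf. Qed.

Lemma mag_idem p : e p = p -> add p p = p.
Proof. intro H. pattern p at 2 3. rewrite <- H. rewrite H at 2. apply A2_e. Qed.

Lemma eadd_mag p q : e p = p -> e q = q -> e (add p q) = add p q.
Proof.
  intros Hp Hq. apply idem_mag.
  rewrite <- addA. rewrite (addA q p q). rewrite (addC q p).
  rewrite <- (addA p q q). rewrite (mag_idem q Hq). rewrite addA.
  rewrite (mag_idem p Hp). reflexivity.
Qed.

Lemma opp_mag p : e p = p -> opp p = p.
Proof.
  intro Hp. symmetry. apply A3_uniq.
  - rewrite (mag_idem p Hp). symmetry; exact Hp.
  - reflexivity.
Qed.

Lemma mag_le p q : e p = p -> e q = q -> le p q -> add p q = q.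
Proof.
  intros Hp Hq H.
  destruct (A4 p q) as [E|E]; rewrite (eadd_mag p q Hp Hq) in E.
  - rewrite Hp in E.
    assert (le q p).
    { destruct (O3 p q) as [H1 _].
      - rewrite Hp. rewrite addC. exact E.
      - rewrite Hp in H1. exact H1. }
    assert (p = q) by (apply le_antisym; assumption).
    subst q. exact E.
  - rewrite Hq in E. exact E.
Qed.

Lemma mag_ge p q : e p = p -> e q = q -> le p (add p q).
Proof.
  intros Hp Hq. destruct (le_total p q) as [H|H].
  - rewrite (mag_le p q Hp Hq H). exact H.
  - rewrite addC. rewrite (mag_le q p Hq Hp H). apply le_refl.
Qed.

Lemma le_adde y z : le y (add y (e z)).
Proof.
  destruct (E5 y) as [a [Ha _]].
  pose proof (O2 (e y) (add (e y) (e z)) a (mag_ge (e y) (e z) (ee y) (ee z))) as H.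
  assert (E1 : add (e y) a = y) by (rewrite addC; symmetry; exact Ha).
  assert (E2 : add (add (e y) (e z)) a = add y (e z)).
  { rewrite addC. rewrite addA. rewrite <- Ha. reflexivity. }
  rewrite E1, E2 in H. exact H.
Qed.

Lemma le_add_pos y z : le (e z) z -> le y (add y z).
Proof.
  intro Hz. apply le_trans with (add y (e z)).
  - apply le_adde.
  - pose proof (O2 (e z) z y Hz) as H. rewrite (addC (e z) y), (addC z y) in H. exact H.
Qed.

Lemma mulmag x y : e (mul (e x) y) = mul (e x) y.
Proof. destruct (AM1 x y) as [w Hw]. rewrite Hw. apply ee. Qed.

Lemma key_pos x y z : le (e y) y -> le (e z) z ->
  add (mul (e x) y) (mul (e x) (add y z)) = mul (e x) (add y z).
Proof.
  intros Hy Hz. apply mag_le; try apply mulmag.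
  apply O5. exact Hy. apply le_add_pos. exact Hz.
Qed.

Lemma eadd_gen y z : e (add y z) = add (e y) (e z).
Proof.
  apply le_antisym.
  - destruct (A4 y z) as [E|E]; rewrite E.
    + apply mag_ge; apply ee.
    + rewrite addC. apply mag_ge; apply ee.
  - assert (H : add (add y z) (add (e y) (e z)) = add y z).
    { rewrite addA. rewrite <- (addA y z (e y)). rewrite (addC z (e y)).
      rewrite (addA y (e y) z). rewrite A2_e. rewrite <- addA. rewrite A2_e. reflexivity. }
    pose proof (A2_min _ _ H) as H2.
    destruct (O3 (add y z) (add (e y) (e z))) as [H3 _].
    + rewrite addC. exact H2.
    + exact H3.
Qed.

Lemma e_opp y : e (opp y) = e y.
Proof. destruct (A3_opp y) as [_ H]. exact H. Qed.

Lemma opp_add y z : opp (add y z) = add (opp y) (opp z).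
Proof.
  symmetry. apply A3_uniq.
  - rewrite eadd_gen.
    rewrite addA. rewrite <- (addA y z (opp y)). rewrite (addC z (opp y)).
    rewrite (addA y (opp y) z). destruct (A3_opp y) as [Hy _]. rewrite Hy.
    rewrite <- addA. destruct (A3_opp z) as [Hz _]. rewrite Hz. reflexivity.
  - rewrite !eadd_gen, !e_opp. reflexivity.
Qed.

Lemma neg_pos y : negative y -> le (e (opp y)) (opp y).
Proof.
  intros [H _]. pose proof (O2 y (e y) (opp y) H) as H2.
  destruct (A3_opp y) as [Hy He]. rewrite Hy in H2.
  rewrite <- He in H2 at 1 2. rewrite addC, A2_e in H2. exact H2.
Qed.

Lemma mul_opp_mag x y : mul (e x) (opp y) = mul (e x) y.
Proof.
  rewrite mulC. rewrite <- AM5. rewrite mulC. apply opp_mag. apply mulmag.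
Qed.

Lemma key x y z : (positive y /\ positive z) \/ (negative y /\ negative z) ->
  add (mul (e x) y) (mul (e x) (add y z)) = mul (e x) (add y z).
Proof.
  intros [[Hy Hz]|[Hy Hz]].
  - apply key_pos; assumption.
  - pose proof (key_pos x (opp y) (opp z) (neg_pos y Hy) (neg_pos z Hz)) as H.
    rewrite <- opp_add in H. rewrite !mul_opp_mag in H. exact H.
Qed.

End L.

Theorem mainTheorem4 (T : solid) (x y z : T) :
  (positive y /\ positive z) \/ (negative y /\ negative z) ->
  mul x (add y z) = add (mul x y) (mul x z).
Proof.
  intro Hs.
  pose proof (key T x y z Hs) as K1.
  assert (Hs' : (positive z /\ positive y) \/ (negative z /\ negative y)) by tauto.
  pose proof (key T x z y Hs') as K2. rewrite (addC z y) in K2.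
  rewrite AM4.
  set (w := mul x (add y z)).
  set (A := mul (e x) y). set (B := mul (e x) (add y z)). set (C := mul (e x) z).
  fold A in K1. fold B in K1. fold C in K2. fold B in K2.
  assert (H : add (e w) (add A C) = e w).
  { unfold w. rewrite AM2. fold B.
    set (D := mul (e (add y z)) x).
    transitivity (add (add C (add A B)) D).
    - rewrite (addC C (add A B)). rewrite <- (addA A B C). rewrite (addC A (add B C)).
      rewrite <- (addA B C A). rewrite (addC C A). rewrite <- (addA B (add A C) D).
      rewrite (addC (add A C) D). rewrite (addA B D (add A C)). reflexivity.
    - rewrite K1, K2. reflexivity. }
  rewrite <- addA.
  rewrite <- (A2_e w) at 2. rewrite <- addA. rewrite H. symmetry. apply A2_e.
Qed.
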